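(* Let $G$ be a finitely presented group which does not contain a subgroup isomorphic to the free group $F_2$ of rank $2$. Then $\operatorname{rg}(G,\phi)=0$ for every primitive class $\phi\in H^1(G;\mathbb{Z})$.
   Context: A class $\phi\in H^1(G;\mathbb{Z})=\operatorname{Hom}(G,\mathbb{Z})$ is primitive if it is surjective. For a group $H$, $\operatorname{rk}(H)$ is the minimal number of generators. For finitely generated $G$ and primitive $\phi$, with $G_i=\operatorname{Ker}(G\xrightarrow{\phi}\mathbb{Z}\to\mathbb{Z}/i)$, the rank gradient is $\operatorname{rg}(G,\phi)=\liminf_{i\to\infty}\frac{\operatorname{rk}(G_i)}{[G:G_i]}$. *)

(* Defs.v *)
From Stdlib Require Import Reals ZArith List.
Import ListNotations.

Record Group := {
  carrier :> Type;
  gmul : carrier -> carrier -> carrier;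
  ginv : carrier -> carrier;
  gone : carrier;
  gmul_assoc : forall x y z, gmul x (gmul y z) = gmul (gmul x y) z;
  gmul_1l : forall x, gmul gone x = x;
  gmul_Vl : forall x, gmul (ginv x) x = gone
}.

Arguments gmul {_}. Arguments ginv {_}. Arguments gone {_}.

(* A letter (k, false) is the generator x_k, (k, true) is x_k^{-1}. *)
Definition letter := (nat * bool)%type.
Definition word := list letter.

Definition letter_inv (l : letter) : letter := (fst l, negb (snd l)).

Fixpoint eval_word {G : Group} (g : nat -> G) (w : word) : G :=
  match w with
  | [] => gone
  | (k, false) :: w' => gmul (g k) (eval_word g w')
  | (k, true) :: w' => gmul (ginv (g k)) (eval_word g w')
  end.

Definition word_on (n : nat) (w : word) : Prop :=
  forall l, In l w -> (fst l < n)%nat.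

Fixpoint reduced (w : word) : Prop :=
  match w with
  | [] => True
  | l :: w' =>
      match w' with
      | [] => True
      | l' :: _ => l' <> letter_inv l /\ reduced w'
      end
  end.

(* The free group F_2 is the group of reduced words on x_0, x_1.  A
   homomorphism F_2 -> G is determined by the images a, b of x_0, x_1 and
   sends a reduced word w to eval_word [a;b] w; it is injective iff no
   nonempty reduced word is sent to 1.  G contains a subgroup isomorphic to
   F_2 iff some such homomorphism is injective. *)
Definition contains_F2 (G : Group) : Prop :=
  exists a b : G,
    forall w : word, word_on 2 w -> reduced w -> w <> [] ->
      eval_word (fun k => if Nat.eqb k 0 then a else b) w <> gone.

(* Equivalence on words generated by free reductions and insertion of
   relators (and inverse relators); w ~ [] iff w lies in the normal
   closure of R in the free group. *)
Definition word_inv (w : word) : word := rev (map letter_inv w).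

Inductive pres_equiv (R : list word) : word -> word -> Prop :=
  | pe_refl : forall w, pres_equiv R w w
  | pe_sym : forall u v, pres_equiv R u v -> pres_equiv R v u
  | pe_trans : forall u v t, pres_equiv R u v -> pres_equiv R v t -> pres_equiv R u t
  | pe_free : forall u v l, pres_equiv R (u ++ v) (u ++ l :: letter_inv l :: v)
  | pe_rel : forall u v r, In r R -> pres_equiv R (u ++ v) (u ++ r ++ v).

(* G is isomorphic to < x_0, ..., x_{n-1} | R > via x_k |-> g k:
   the map from words to G is surjective, kills the relators,
   and its kernel is exactly the normal closure of R. *)
Definition finitely_presented (G : Group) : Prop :=
  exists (n : nat) (g : nat -> G) (R : list word),
    (forall r, In r R -> word_on n r) /\
    (forall x : G, exists w, word_on n w /\ eval_word g w = x) /\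
    (forall r, In r R -> eval_word g r = gone) /\
    (forall w, word_on n w -> eval_word g w = gone -> pres_equiv R w []).

Definition is_hom_Z (G : Group) (phi : G -> Z) : Prop :=
  forall x y : G, phi (gmul x y) = (phi x + phi y)%Z.

Definition primitive_class (G : Group) (phi : G -> Z) : Prop :=
  is_hom_Z G phi /\ forall z : Z, exists x : G, phi x = z.

(* G_i = Ker(G --phi--> Z --> Z/i) *)
Definition Gi (G : Group) (phi : G -> Z) (i : nat) : G -> Prop :=
  fun x => (Z.of_nat i | phi x)%Z.

Definition rank_le (G : Group) (H : G -> Prop) (n : nat) : Prop :=
  exists L : list G,
    (length L <= n)%nat /\
    (forall x, In x L -> H x) /\
    (forall x, H x -> exists w, word_on (length L) w /\
                     eval_word (fun k => nth k L gone) w = x).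

(* rg(G,phi) = liminf_i rk(G_i)/[G:G_i] = 0.  For primitive phi,
   [G:G_i] = i.  Since the terms are >= 0, liminf = 0 iff for every
   eps > 0 and every N there is i >= N with rk(G_i)/i < eps, i.e. some
   n with rk(G_i) <= n and n < eps * i. *)
Definition rank_gradient_zero (G : Group) (phi : G -> Z) : Prop :=
  forall (eps : R) (N : nat), (0 < eps)%R ->
    exists (i n : nat), (N <= i)%nat /\ (1 <= i)%nat /\
      rank_le G (Gi G phi i) n /\ (INR n < eps * INR i)%R.

(* Main.v *)
Require Import Defs.
From Stdlib Require Import Reals ZArith List.
From Stdlib Require Import Reals ZArith List Lia.
From Stdlib Require Import ClassicalEpsilon FunctionalExtensionality PropExtensionality ProofIrrelevance Classical.
Import ListNotations.
Open Scope Z_scope.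

Section GroupLemmas.
Variable G : Group.
Local Infix "**" := (@gmul G) (at level 40, left associativity).

Lemma gmul_Vr (x : G) : x ** ginv x = gone.
Proof.
  rewrite <- (gmul_1l _ (x ** ginv x)).
  rewrite <- (gmul_Vl _ (ginv x)) at 1.
  rewrite <- gmul_assoc. rewrite (gmul_assoc _ (ginv x) x (ginv x)).
  rewrite gmul_Vl, gmul_1l. apply gmul_Vl.
Qed.

Lemma gmul_1r (x : G) : x ** gone = x.
Proof. rewrite <- (gmul_Vl _ x), gmul_assoc, gmul_Vr, gmul_1l. reflexivity. Qed.

Lemma gmulKV (x y : G) : ginv x ** (x ** y) = y.
Proof. rewrite gmul_assoc, gmul_Vl, gmul_1l. reflexivity. Qed.
Lemma gmulVK (x y : G) : x ** (ginv x ** y) = y.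
Proof. rewrite gmul_assoc, gmul_Vr, gmul_1l. reflexivity. Qed.

Lemma gmul_cancel_l (x y z : G) : x ** y = x ** z -> y = z.
Proof. intro H. rewrite <- (gmulKV x y), H, gmulKV. reflexivity. Qed.

Lemma ginv_uniq (x y : G) : x ** y = gone -> y = ginv x.
Proof. intro H. apply (gmul_cancel_l x). rewrite H, gmul_Vr. reflexivity. Qed.

Lemma ginv_ginv (x : G) : ginv (ginv x) = x.
Proof. symmetry. apply ginv_uniq. apply gmul_Vl. Qed.

Lemma ginv_mul (x y : G) : ginv (x ** y) = ginv y ** ginv x.
Proof. symmetry. apply ginv_uniq. rewrite <- gmul_assoc, (gmul_assoc _ y), gmul_Vr, gmul_1l, gmul_Vr. reflexivity. Qed.

Lemma ginv_one : ginv (@gone G) = gone.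
Proof. symmetry. apply ginv_uniq. apply gmul_1l. Qed.

Lemma gmul_eq_inv (x y : G) : x ** ginv y = gone -> x = y.
Proof. intro H. apply ginv_uniq in H. rewrite <- (ginv_ginv x), <- H, ginv_ginv. reflexivity. Qed.

End GroupLemmas.

Ltac gsimpl :=
  repeat (rewrite <- ?gmul_assoc; rewrite ?gmul_1l, ?gmul_1r, ?ginv_mul, ?ginv_ginv, ?ginv_one,
          ?gmul_Vl, ?gmul_Vr, ?gmulKV, ?gmulVK).

Ltac gsimpl_in H :=
  repeat (rewrite <- ?gmul_assoc in H; rewrite ?gmul_1l, ?gmul_1r, ?ginv_mul, ?ginv_ginv, ?ginv_one,
          ?gmul_Vl, ?gmul_Vr, ?gmulKV, ?gmulVK in H).

Section Pow.
Variable G : Group.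
Local Infix "**" := (@gmul G) (at level 40, left associativity).

Fixpoint npow (x : G) (n : nat) : G :=
  match n with O => gone | S n => x ** npow x n end.

Definition zpow (x : G) (z : Z) : G :=
  if Z.leb 0 z then npow x (Z.to_nat z) else npow (ginv x) (Z.to_nat (- z)).

Lemma zpow0 x : zpow x 0 = gone. Proof. reflexivity. Qed.

Lemma zpow_succ x z : zpow x (z + 1) = x ** zpow x z.
Proof.
  unfold zpow. destruct (Z.leb_spec 0 z).
  - destruct (Z.leb_spec 0 (z+1)); [|lia].
    replace (Z.to_nat (z+1)) with (S (Z.to_nat z)) by lia. reflexivity.
  - destruct (Z.leb_spec 0 (z+1)).
    + assert (z = -1) by lia. subst. simpl. gsimpl. reflexivity.
    + replace (Z.to_nat (- z)) with (S (Z.to_nat (- (z+1)))) by lia. simpl. gsimpl. reflexivity.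
Qed.

Lemma zpow_pred x z : zpow x (z - 1) = ginv x ** zpow x z.
Proof.
  replace z with ((z - 1) + 1) at 2 by lia. rewrite zpow_succ. gsimpl. reflexivity.
Qed.

Lemma zpow_add x a b : zpow x (a + b) = zpow x a ** zpow x b.
Proof.
  induction a using Z.peano_ind.
  - simpl. rewrite zpow0, gmul_1l. reflexivity.
  - replace (Z.succ a + b) with ((a + b) + 1) by lia. unfold Z.succ.
    rewrite !zpow_succ, IHa. gsimpl. reflexivity.
  - replace (Z.pred a + b) with ((a + b) - 1) by lia. unfold Z.pred.
    replace (a + -1) with (a - 1) by lia.
    rewrite !zpow_pred, IHa. gsimpl. reflexivity.
Qed.

Lemma zpow1 x : zpow x 1 = x.
Proof. change 1 with (0+1). rewrite zpow_succ, zpow0, gmul_1r. reflexivity. Qed.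

Lemma zpow_neg x z : zpow x (- z) = ginv (zpow x z).
Proof. apply ginv_uniq. rewrite <- zpow_add. replace (z + - z) with 0 by lia. reflexivity. Qed.

Lemma zpow_mul x a b : zpow x (a * b) = zpow (zpow x a) b.
Proof.
  induction b using Z.peano_ind.
  - rewrite Z.mul_0_r. reflexivity.
  - unfold Z.succ. replace (a * (b + 1)) with (a + a * b) by lia.
    rewrite zpow_add, zpow_succ, IHb. reflexivity.
  - unfold Z.pred. replace (a * (b + -1)) with (- a + a * b) by lia.
    replace (b + -1) with (b - 1) by lia.
    rewrite zpow_add, zpow_pred, IHb, zpow_neg. reflexivity.
Qed.

End Pow.
Arguments npow {G}. Arguments zpow {G}.

Section Hom.
Variables G H : Group.
Variable f : G -> H.
Hypothesis fM : forall x y, f (gmul x y) = gmul (f x) (f y).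

Lemma hom1 : f gone = gone.
Proof. apply (gmul_cancel_l _ (f gone)). rewrite <- fM, !gmul_1r. reflexivity. Qed.

Lemma homV x : f (ginv x) = ginv (f x).
Proof. apply ginv_uniq. rewrite <- fM, gmul_Vr. apply hom1. Qed.

Lemma hom_zpow x z : f (zpow x z) = zpow (f x) z.
Proof.
  induction z using Z.peano_ind.
  - apply hom1.
  - unfold Z.succ. rewrite !zpow_succ, fM, IHz. reflexivity.
  - unfold Z.pred. replace (z + -1) with (z - 1) by lia. rewrite !zpow_pred, fM, IHz, homV. reflexivity.
Qed.

Lemma hom_eval (g : nat -> G) w : f (eval_word g w) = eval_word (fun k => f (g k)) w.
Proof.
  induction w as [|[k b] w IH]; simpl. apply hom1.
  destruct b; rewrite fM, IH; try rewrite homV; reflexivity.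
Qed.
End Hom.

Section Words.
Variable G : Group.
Variable f : nat -> G.

Definition lval (l : letter) : G := if snd l then ginv (f (fst l)) else f (fst l).

Lemma eval_cons l w : eval_word f (l :: w) = gmul (lval l) (eval_word f w).
Proof. destruct l as [k []]; reflexivity. Qed.

Lemma eval_app u v : eval_word f (u ++ v) = gmul (eval_word f u) (eval_word f v).
Proof.
  induction u as [|l u IH]. simpl. rewrite gmul_1l; reflexivity.
  rewrite <- app_comm_cons, !eval_cons, IH, gmul_assoc. reflexivity.
Qed.

Lemma lval_inv l : lval (letter_inv l) = ginv (lval l).
Proof. destruct l as [k []]; unfold lval; simpl; gsimpl; reflexivity. Qed.

Lemma eval_inv w : eval_word f (word_inv w) = ginv (eval_word f w).
Proof.
  induction w as [|l w IH]. simpl. rewrite ginv_one. reflexivity.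
  unfold word_inv. simpl map. simpl rev. rewrite eval_app. fold (word_inv w). rewrite IH.
  rewrite (eval_cons l w). rewrite (eval_cons (letter_inv l) []). rewrite lval_inv. simpl eval_word. gsimpl. reflexivity.
Qed.

Fixpoint nrep (w : word) (n : nat) : word := match n with O => [] | S n => w ++ nrep w n end.
Definition pw (w : word) (z : Z) : word :=
  if Z.leb 0 z then nrep w (Z.to_nat z) else nrep (word_inv w) (Z.to_nat (- z)).

Lemma eval_nrep w n : eval_word f (nrep w n) = npow (eval_word f w) n.
Proof. induction n; simpl. reflexivity. rewrite eval_app, IHn. reflexivity. Qed.

Lemma eval_pw w z : eval_word f (pw w z) = zpow (eval_word f w) z.
Proof. unfold pw, zpow. destruct (Z.leb 0 z); rewrite eval_nrep; try rewrite eval_inv; reflexivity. Qed.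

Definition wsubst (u : nat -> word) (W : word) : word :=
  flat_map (fun l : letter => if snd l then word_inv (u (fst l)) else u (fst l)) W.

Lemma eval_wsubst u W : eval_word f (wsubst u W) = eval_word (fun k => eval_word f (u k)) W.
Proof.
  induction W as [|[k b] W IH]; simpl. reflexivity.
  rewrite eval_app, IH. destruct b; try rewrite eval_inv; reflexivity.
Qed.

Lemma pres_inv R (Hr : forall r, In r R -> eval_word f r = gone) u v :
  pres_equiv R u v -> eval_word f u = eval_word f v.
Proof.
  induction 1; try congruence.
  - rewrite !eval_app, !eval_cons, lval_inv, gmulVK. reflexivity.
  - rewrite !eval_app. rewrite (Hr r) by assumption. rewrite !gmul_1l; reflexivity.
Qed.
End Words.
Arguments lval {G}. Arguments nrep : clear implicits. Arguments pw : clear implicits.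

Lemma word_on_app n u v : word_on n u -> word_on n v -> word_on n (u ++ v).
Proof. unfold word_on. intros. apply in_app_or in H1. destruct H1; auto. Qed.
Lemma word_on_inv n u : word_on n u -> word_on n (word_inv u).
Proof. unfold word_on, word_inv. intros. apply in_rev in H0. apply in_map_iff in H0.
  destruct H0 as [x [<- Hx]]. simpl. auto. Qed.
Lemma word_on_nrep n u m : word_on n u -> word_on n (nrep u m).
Proof. intros. induction m; simpl. intros l []. apply word_on_app; auto. Qed.
Lemma word_on_pw n u z : word_on n u -> word_on n (pw u z).
Proof. intros. unfold pw. destruct (Z.leb 0 z); apply word_on_nrep; auto using word_on_inv. Qed.
Lemma word_on_nil n : word_on n []. Proof. intros l []. Qed.
Lemma word_on_cons n l w : (fst l < n)%nat -> word_on n w -> word_on n (l :: w).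
Proof. intros H1 H2 l' [<-|H]; auto. Qed.

Lemma univ (G H : Group) (g : nat -> G) (sg : nat -> H) (n : nat) (R : list word)
  (Hpres : forall w, word_on n w -> eval_word g w = gone -> pres_equiv R w [])
  (Hrel : forall r, In r R -> eval_word sg r = gone) u v :
  word_on n u -> word_on n v -> eval_word g u = eval_word g v -> eval_word sg u = eval_word sg v.
Proof.
  intros Hu Hv E.
  assert (Hw : pres_equiv R (u ++ word_inv v) []).
  { apply Hpres. apply word_on_app; auto using word_on_inv.
    rewrite eval_app, eval_inv, E, gmul_Vr. reflexivity. }
  apply (pres_inv _ sg) in Hw; auto. rewrite eval_app, eval_inv in Hw. simpl in Hw.
  apply gmul_eq_inv; auto.
Qed.

Record perm (X : Type) := mkperm { pf : X -> X; pg : X -> X; pfg : forall x, pf (pg x) = x; pgf : forall x, pg (pf x) = x }.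
Arguments pf {X}. Arguments pg {X}.

Lemma perm_ext X (p q : perm X) : (forall x, pf p x = pf q x) -> p = q.
Proof.
  intros E. destruct p as [f1 g1 a1 b1], q as [f2 g2 a2 b2]; simpl in *.
  assert (f1 = f2) by (apply functional_extensionality; auto). subst f2.
  assert (g1 = g2).
  { apply functional_extensionality. intro x. rewrite <- (a2 x) at 1. rewrite b1. reflexivity. }
  subst g2. f_equal; apply proof_irrelevance.
Qed.

Section PermGroup.
Variable X : Type.
Definition pmul (p q : perm X) : perm X.
  refine (mkperm X (fun x => pf p (pf q x)) (fun x => pg q (pg p x)) _ _).
  - intro x. rewrite pfg, pfg. reflexivity.
  - intro x. rewrite pgf, pgf. reflexivity.
Defined.
Definition pinv (p : perm X) : perm X := mkperm X (pg p) (pf p) (pgf X p) (pfg X p).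
Definition pone : perm X := mkperm X (fun x => x) (fun x => x) (fun x => eq_refl) (fun x => eq_refl).
Definition PermG : Group.
  refine (Build_Group (perm X) pmul pinv pone _ _ _).
  - intros. apply perm_ext. reflexivity.
  - intros. apply perm_ext. reflexivity.
  - intros. apply perm_ext. intro. simpl. apply pgf.
Defined.
End PermGroup.
From Stdlib Require Import Reals ZArith List Lia.
From Stdlib Require Import ClassicalEpsilon FunctionalExtensionality PropExtensionality ProofIrrelevance Classical.
Import ListNotations.
Open Scope Z_scope.

Inductive gen {G : Group} (S : G -> Prop) : G -> Prop :=
| gen1 : gen S gone
| genM s x : S s -> gen S x -> gen S (gmul s x)
| genVM s x : S s -> gen S x -> gen S (gmul (ginv s) x).

Section GenL.
Variable G : Group.
Lemma gen_incl (S : G -> Prop) x : S x -> gen S x.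
Proof. intro. rewrite <- gmul_1r. apply genM; auto. constructor. Qed.
Lemma gen_mul (S : G -> Prop) x y : gen S x -> gen S y -> gen S (gmul x y).
Proof. induction 1; intros.
  - rewrite gmul_1l; auto.
  - rewrite <- gmul_assoc; apply genM; auto.
  - rewrite <- gmul_assoc; apply genVM; auto. Qed.
Lemma gen_inv (S : G -> Prop) x : gen S x -> gen S (ginv x).
Proof.
  induction 1. rewrite ginv_one; constructor.
  - rewrite ginv_mul. apply gen_mul; auto. rewrite <- gmul_1r. apply genVM; auto; constructor.
  - rewrite ginv_mul, ginv_ginv. apply gen_mul; auto. apply gen_incl; auto.
Qed.
Lemma gen_sub (S S' : G -> Prop) : (forall x, S x -> gen S' x) -> forall x, gen S x -> gen S' x.
Proof. intros H x. induction 1. constructor. apply gen_mul; auto. apply gen_mul; auto. apply gen_inv; auto. Qed.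
Lemma gen_conj (S : G -> Prop) (c : G) x : gen S x ->
  gen (fun y => exists s, S s /\ y = gmul (gmul c s) (ginv c)) (gmul (gmul c x) (ginv c)).
Proof.
  induction 1.
  - rewrite gmul_1r, gmul_Vr. constructor.
  - replace (gmul (gmul c (gmul s x)) (ginv c)) with (gmul (gmul (gmul c s) (ginv c)) (gmul (gmul c x) (ginv c)))
      by (gsimpl; reflexivity).
    apply genM; eauto.
  - replace (gmul (gmul c (gmul (ginv s) x)) (ginv c)) with (gmul (ginv (gmul (gmul c s) (ginv c))) (gmul (gmul c x) (ginv c)))
      by (gsimpl; reflexivity).
    apply genVM; eauto.
Qed.
End GenL.

Lemma sig_eq {T} {P : T -> Prop} (x y : {a | P a}) : proj1_sig x = proj1_sig y -> x = y.
Proof. destruct x, y; simpl; intros; subst; f_equal; apply proof_irrelevance. Qed.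

Section NF.
Variable G : Group.
Variable t : G.
Variable A : G -> Prop.
Hypothesis A1 : A gone.
Hypothesis AM : forall x y, A x -> A y -> A (gmul x y).
Hypothesis AV : forall x, A x -> A (ginv x).

Definition Cs (x : G) : Prop := A (gmul (gmul (ginv t) x) t).
Definition Sub (b : bool) : G -> Prop := if b then Cs else A.
Definition cj (b : bool) (y : G) : G :=
  if b then gmul (gmul (ginv t) y) t else gmul (gmul t y) (ginv t).

Lemma Sub1 b : Sub b gone.
Proof. destruct b; simpl; unfold Cs; auto. gsimpl. auto. Qed.
Lemma SubM b x y : Sub b x -> Sub b y -> Sub b (gmul x y).
Proof. destruct b; simpl; unfold Cs; auto. intros. 
  replace (gmul (gmul (ginv t) (gmul x y)) t) with (gmul (gmul (gmul (ginv t) x) t) (gmul (gmul (ginv t) y) t))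
    by (gsimpl; reflexivity). auto. Qed.
Lemma SubV b x : Sub b x -> Sub b (ginv x).
Proof. destruct b; simpl; unfold Cs; auto. intros.
  replace (gmul (gmul (ginv t) (ginv x)) t) with (ginv (gmul (gmul (ginv t) x) t)) by (gsimpl; reflexivity). auto. Qed.
Lemma cjM b x y : cj b (gmul x y) = gmul (cj b x) (cj b y).
Proof. destruct b; simpl; gsimpl; reflexivity. Qed.
Lemma cjK b x : cj (negb b) (cj b x) = x.
Proof. destruct b; simpl; gsimpl; reflexivity. Qed.
Lemma Sub_cj b a : Sub b a -> Sub (negb b) (cj b a).
Proof. destruct b; simpl; unfold Cs; auto. intros. gsimpl. auto. Qed.

Lemma SubMl b x y : Sub b x -> Sub b (gmul x y) -> Sub b y.
Proof. intros. replace y with (gmul (ginv x) (gmul x y)) by (gsimpl; reflexivity). apply SubM; auto. apply SubV; auto. Qed.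

Definition repP (b : bool) (g r : G) : Prop := Sub b (gmul g (ginv r)) /\ (Sub b g -> r = gone).
Definition rep (b : bool) (g : G) : G := epsilon (inhabits gone) (repP b g).

Lemma rep_spec b g : repP b g (rep b g).
Proof.
  unfold rep. apply epsilon_spec. destruct (classic (Sub b g)).
  - exists gone. split; auto. rewrite ginv_one, gmul_1r. auto.
  - exists g. split. rewrite gmul_Vr. apply Sub1. tauto.
Qed.

Lemma rep_mul b a g : Sub b a -> rep b (gmul a g) = rep b g.
Proof.
  intro Ha. unfold rep. f_equal. apply functional_extensionality. intro r.
  apply propositional_extensionality. unfold repP. split; intros [H1 H2]; split.
  - rewrite <- gmul_assoc in H1. apply (SubMl b a); auto.
  - intro. apply H2. apply SubM; auto.
  - rewrite <- gmul_assoc. apply SubM; auto.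
  - intro. apply H2. apply (SubMl b a); auto.
Qed.

Lemma rep_one b g : rep b g = gone <-> Sub b g.
Proof.
  destruct (rep_spec b g) as [H1 H2]. split; auto.
  intro E. rewrite E, ginv_one, gmul_1r in H1. auto.
Qed.

Lemma rep_dec b g : rep b g = gmul (ginv (gmul g (ginv (rep b g)))) g.
Proof. gsimpl. reflexivity. Qed.

Lemma rep_idem b g : rep b (rep b g) = rep b g.
Proof.
  assert (E := rep_dec b g). remember (rep b g) as r. rewrite E at 1. rewrite rep_mul.
  auto. apply SubV. subst r. apply rep_spec.
Qed.

Definition nf := (G * list (bool * G))%type.

Fixpoint vl (l : list (bool * G)) : Prop :=
  match l with
  | [] => True
  | (b, r) :: l' => rep b r = r /\
      (r = gone -> match l' with [] => True | (b', _) :: _ => b' = b end) /\ vl l'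
  end.

Definition pinch (b : bool) (x : nf) : Prop :=
  rep b (fst x) = gone /\ exists g1 l', snd x = (negb b, g1) :: l'.

Definition step (b : bool) (x : nf) : nf :=
  if excluded_middle_informative (pinch b x) then
    match snd x with (_, g1) :: l' => (gmul (cj b (fst x)) g1, l') | [] => x end
  else (cj b (gmul (fst x) (ginv (rep b (fst x)))), (b, rep b (fst x)) :: snd x).

Lemma step_p b g0 g1 l' : Sub b g0 -> step b (g0, (negb b, g1) :: l') = (gmul (cj b g0) g1, l').
Proof.
  intro H. unfold step. destruct excluded_middle_informative as [_|n]. reflexivity.
  exfalso. apply n. split. apply rep_one; auto. simpl; eauto.
Qed.

Lemma step_np b x : ~ pinch b x ->
  step b x = (cj b (gmul (fst x) (ginv (rep b (fst x)))), (b, rep b (fst x)) :: snd x).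
Proof. intro H. unfold step. destruct excluded_middle_informative; tauto. Qed.

Lemma step_valid b x : vl (snd x) -> vl (snd (step b x)).
Proof.
  destruct x as [g0 l]. simpl. intro V. destruct (classic (pinch b (g0, l))) as [P|P].
  - destruct P as [P1 [g1 [l' E]]]. simpl in *. subst l.
    apply rep_one in P1. rewrite step_p by auto. simpl. simpl in V. tauto.
  - rewrite step_np by auto. simpl. split. apply rep_idem. split; auto.
    intro E. destruct l as [|[b' g1] l']; auto.
    destruct (Bool.bool_dec b' b); auto. exfalso. apply P. split; simpl; auto.
    exists g1, l'. f_equal. f_equal. destruct b, b'; simpl in *; congruence.
Qed.

Lemma step_inv b x : vl (snd x) -> step (negb b) (step b x) = x.
Proof.
  destruct x as [g0 l]. simpl. intro V. destruct (classic (pinch b (g0, l))) as [P|P].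
  - destruct P as [P1 [g1 [l' E]]]. simpl in *. subst l.
    apply rep_one in P1. rewrite step_p by auto.
    simpl in V. destruct V as [V1 [V2 V3]].
    assert (Hr : rep (negb b) (gmul (cj b g0) g1) = g1).
    { rewrite rep_mul. auto. apply Sub_cj; auto. }
    rewrite step_np.
    + simpl. rewrite Hr. gsimpl. rewrite cjK. reflexivity.
    + intros [Q1 [g2 [l0 E]]]. simpl in E, Q1. rewrite Hr in Q1. subst. simpl in V2. specialize (V2 eq_refl). destruct b; simpl in V2; discriminate.
  - rewrite (step_np b (g0, l)) by auto. simpl.
    set (r := rep b g0).
    assert (Hs : Sub (negb b) (cj b (gmul g0 (ginv r)))).
    { apply Sub_cj. apply rep_spec. }
    pose proof (step_p (negb b) (cj b (gmul g0 (ginv r))) r l Hs) as E.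
    rewrite Bool.negb_involutive in E. rewrite E. rewrite cjK. f_equal. gsimpl. reflexivity.
Qed.

Lemma step_L b a x : Sub b a ->
  step b (gmul a (fst x), snd x) = (gmul (cj b a) (fst (step b x)), snd (step b x)).
Proof.
  intro Ha. destruct x as [g0 l]. simpl.
  assert (Er : rep b (gmul a g0) = rep b g0) by (apply rep_mul; auto).
  destruct (classic (pinch b (g0, l))) as [P|P].
  - destruct P as [P1 [g1 [l' E]]]. simpl in *. subst l. apply rep_one in P1.
    rewrite !step_p; auto. simpl. rewrite cjM. gsimpl. reflexivity. apply SubM; auto.
  - rewrite !step_np; auto. simpl. rewrite Er, !cjM. gsimpl. reflexivity.
    intros [Q1 Q2]. apply P. split; auto. simpl in *. rewrite <- Er. auto.
Qed.

Definition X := {x : nf | vl (snd x)}.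

Definition Sperm (b : bool) : perm X.
  refine (mkperm X (fun x => exist _ (step b (proj1_sig x)) (step_valid b _ (proj2_sig x)))
                   (fun x => exist _ (step (negb b) (proj1_sig x)) (step_valid (negb b) _ (proj2_sig x))) _ _).
  - intro x. apply sig_eq. simpl. pose proof (step_inv (negb b) (proj1_sig x) (proj2_sig x)).
    rewrite Bool.negb_involutive in H. auto.
  - intro x. apply sig_eq. simpl. apply step_inv. apply proj2_sig.
Defined.

Definition Lperm (g : G) : perm X.
  refine (mkperm X (fun x => exist _ (gmul g (fst (proj1_sig x)), snd (proj1_sig x)) (proj2_sig x))
                   (fun x => exist _ (gmul (ginv g) (fst (proj1_sig x)), snd (proj1_sig x)) (proj2_sig x)) _ _).
  - intro x. apply sig_eq. simpl. gsimpl. destruct (proj1_sig x); reflexivity.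
  - intro x. apply sig_eq. simpl. gsimpl. destruct (proj1_sig x); reflexivity.
Defined.

Definition Hgrp := PermG X.

Lemma LpermM x y : Lperm (gmul x y) = @gmul Hgrp (Lperm x) (Lperm y).
Proof. apply perm_ext. intro z. apply sig_eq. simpl. rewrite gmul_assoc. reflexivity. Qed.

Lemma Sperm_conj b a : Sub b a ->
  @gmul Hgrp (Sperm b) (Lperm a) = @gmul Hgrp (Lperm (cj b a)) (Sperm b).
Proof.
  intro Ha. apply perm_ext. intro z. apply sig_eq. simpl.
  rewrite step_L by auto. destruct (step b (proj1_sig z)); reflexivity.
Qed.

Lemma Sperm_inv : @ginv Hgrp (Sperm false) = Sperm true.
Proof. apply perm_ext. intro. reflexivity. Qed.

Section PingPong.
Variables p q : G.
Hypothesis Hp : ~ Cs p.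
Hypothesis Hq : ~ A q.

Definition act (c : bool * bool) (x : nf) : nf :=
  match c with
  | (true, false) => (gmul p (fst (step false x)), snd (step false x))
  | (true, true) => step true (gmul (ginv p) (fst x), snd x)
  | (false, false) => (gmul q (fst (step true x)), snd (step true x))
  | (false, true) => step false (gmul (ginv q) (fst x), snd x)
  end.

Definition hdsign (l : list (bool * G)) (b : bool) : Prop := exists g1 l', l = (b, g1) :: l'.

Definition XS (c : bool * bool) (x : nf) : Prop :=
  match c with
  | (true, false) => hdsign (snd x) false /\ Cs (gmul (ginv p) (fst x))
  | (true, true) => hdsign (snd x) true /\ A (fst x)
  | (false, false) => hdsign (snd x) true /\ A (gmul (ginv q) (fst x))
  | (false, true) => hdsign (snd x) false /\ Cs (fst x)
  end.

Lemma step_np_in b x : ~ pinch b x -> hdsign (snd (step b x)) b /\ Sub (negb b) (fst (step b x)).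
Proof.
  intro P. rewrite step_np by auto. simpl. split. eexists; eexists; reflexivity.
  apply Sub_cj. apply rep_spec.
Qed.

Lemma nopinch1 b x : ~ Sub b (fst x) -> ~ pinch b x.
Proof. intros N [P _]. apply N. apply rep_one; auto. Qed.
Lemma nopinch2 b x : hdsign (snd x) b -> ~ pinch b x.
Proof. intros [g1 [l' E]] [_ [g2 [l2 E2]]]. rewrite E in E2. inversion E2. destruct b; discriminate. Qed.
Lemma nopinch0 b x : snd x = [] -> ~ pinch b x.
Proof. intros E [_ [g2 [l2 E2]]]. rewrite E in E2. discriminate. Qed.

Lemma Sub_trick b x y : Sub b x -> Sub b (gmul (ginv y) x) -> Sub b y.
Proof. intros H1 H2. replace y with (gmul x (ginv (gmul (ginv y) x))) by (gsimpl; reflexivity).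
  apply SubM; auto. apply SubV; auto. Qed.

Lemma act_in c c' x : snd x = [] \/ (XS c' x /\ c' <> (fst c, negb (snd c))) -> XS c (act c x).
Proof.
  intros Hx.
  destruct c as [[] []]; simpl.
  -
    assert (NP : ~ pinch true (gmul (ginv p) (fst x), snd x)).
    { destruct Hx as [E|[HX Hne]]. apply nopinch0; auto.
      destruct c' as [[] []]; simpl in HX, Hne; try (exfalso; apply Hne; reflexivity);
        destruct HX as [HX1 HX2]; try (apply nopinch2; auto; fail).
      apply nopinch1. simpl. intro Hc. apply Hp. apply (Sub_trick true (fst x)); auto. }
    destruct (step_np_in _ _ NP) as [Q1 Q2]. split; auto.
  -
    assert (NP : ~ pinch false x).
    { destruct Hx as [E|[HX Hne]]. apply nopinch0; auto.
      destruct c' as [[] []]; simpl in HX, Hne; try (exfalso; apply Hne; reflexivity);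
        destruct HX as [HX1 HX2]; try (apply nopinch2; auto; fail).
      apply nopinch1. simpl. intro Hc. apply Hq. apply (Sub_trick false (fst x)); auto. }
    destruct (step_np_in _ _ NP) as [Q1 Q2]. split; auto. simpl in Q2. rewrite gmulKV. auto.
  -
    assert (NP : ~ pinch false (gmul (ginv q) (fst x), snd x)).
    { destruct Hx as [E|[HX Hne]]. apply nopinch0; auto.
      destruct c' as [[] []]; simpl in HX, Hne; try (exfalso; apply Hne; reflexivity);
        destruct HX as [HX1 HX2]; try (apply nopinch2; auto; fail).
      apply nopinch1. simpl. intro Hc. apply Hq. apply (Sub_trick false (fst x)); auto. }
    destruct (step_np_in _ _ NP) as [Q1 Q2]. split; auto.
  -
    assert (NP : ~ pinch true x).
    { destruct Hx as [E|[HX Hne]]. apply nopinch0; auto.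
      destruct c' as [[] []]; simpl in HX, Hne; try (exfalso; apply Hne; reflexivity);
        destruct HX as [HX1 HX2]; try (apply nopinch2; auto; fail).
      apply nopinch1. simpl. intro Hc. apply Hp. apply (Sub_trick true (fst x)); auto. }
    destruct (step_np_in _ _ NP) as [Q1 Q2]. split; auto. simpl in Q2. rewrite gmulKV. auto.
Qed.

Lemma XS_ne c x : XS c x -> snd x <> [].
Proof. destruct c as [[] []]; simpl; intros [[g1 [l' E]] _]; rewrite E; discriminate. Qed.

End PingPong.

End NF.
From Stdlib Require Import Reals ZArith List Lia.
From Stdlib Require Import ClassicalEpsilon FunctionalExtensionality PropExtensionality ProofIrrelevance Classical.
Import ListNotations.
Open Scope Z_scope.

Lemma eval_ext (G0 : Group) (f f' : nat -> G0) w : (forall k, f k = f' k) -> eval_word f w = eval_word f' w.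
Proof. intro E. induction w as [|[k []] w IH]; simpl; rewrite ?E, ?IH; reflexivity. Qed.

Lemma word_on_wsubst n (uu : nat -> word) W : (forall k, word_on n (uu k)) -> word_on n (wsubst uu W).
Proof.
  intro H. induction W as [|[k b] W IH]; simpl. apply word_on_nil.
  apply word_on_app; auto. destruct b; auto using word_on_inv.
Qed.

Lemma gen_zpow (G0 : Group) (S : G0 -> Prop) x q : gen S x -> gen S (zpow x q).
Proof.
  intro Hx. induction q using Z.peano_ind.
  - rewrite zpow0. constructor.
  - unfold Z.succ. rewrite zpow_succ. apply gen_mul; auto.
  - unfold Z.pred. replace (q + -1) with (q - 1) by lia. rewrite zpow_pred. apply gen_mul; auto. apply gen_inv; auto.
Qed.

Lemma gen_words (G0 : Group) (Ls : list G0) x : gen (fun y => In y Ls) x ->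
  exists w, word_on (length Ls) w /\ eval_word (fun k => nth k Ls gone) w = x.
Proof.
  induction 1.
  - exists []. split. apply word_on_nil. reflexivity.
  - destruct IHgen as [w [Ow Ew]]. apply In_nth with (d := gone) in H. destruct H as [k [Hk Ek]].
    exists ((k, false) :: w). split. apply word_on_cons; auto. simpl. rewrite Ew, Ek. reflexivity.
  - destruct IHgen as [w [Ow Ew]]. apply In_nth with (d := gone) in H. destruct H as [k [Hk Ek]].
    exists ((k, true) :: w). split. apply word_on_cons; auto. simpl. rewrite Ew, Ek. reflexivity.
Qed.

Section PhiL.
Variable G : Group.
Variable phi : G -> Z.
Hypothesis phiM : forall x y, phi (gmul x y) = phi x + phi y.
Lemma phi1 : phi gone = 0.
Proof. assert (E := phiM gone gone). rewrite gmul_1l in E. lia. Qed.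
Lemma phiV x : phi (ginv x) = - phi x.
Proof. assert (E := phiM (ginv x) x). rewrite gmul_Vl, phi1 in E. lia. Qed.
Lemma phi_zpow x z : phi (zpow x z) = z * phi x.
Proof.
  induction z using Z.peano_ind. rewrite zpow0, phi1. lia.
  unfold Z.succ. rewrite zpow_succ, phiM, IHz. lia.
  unfold Z.pred. replace (z + -1) with (z - 1) by lia. rewrite zpow_pred, phiM, IHz, phiV. lia.
Qed.
End PhiL.

Section Main.
Variable G : Group.
Variable n : nat.
Variable g : nat -> G.
Variable phi : G -> Z.
Hypothesis phiM : forall x y, phi (gmul x y) = phi x + phi y.
Variable t : G.
Hypothesis Ht : phi t = 1.
Variable K : Z.
Hypothesis K0 : 0 <= K.

Definition e (j : nat) : Z := phi (g j).
Definition a (j : nat) : G := gmul (g j) (zpow t (- e j)).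
Definition conjz (k : Z) (y : G) : G := gmul (gmul (zpow t k) y) (zpow t (- k)).

Definition SA (y : G) : Prop := exists j k, (j < n)%nat /\ -K <= k < K /\ y = conjz k (a j).
Definition A : G -> Prop := gen SA.
Lemma A1 : A gone. Proof. constructor. Qed.
Lemma AM x y : A x -> A y -> A (gmul x y). Proof. apply gen_mul. Qed.
Lemma AV x : A x -> A (ginv x). Proof. apply gen_inv. Qed.

Local Notation HG := (Hgrp G t A).
Definition T : HG := Sperm G t A A1 AM AV false.
Definition L (y : G) : HG := Lperm G t A y.

Lemma LM x y : L (gmul x y) = gmul (L x) (L y). Proof. apply LpermM. Qed.
Lemma L1 : L gone = gone. Proof. apply (hom1 G HG L LM). Qed.
Lemma LV x : L (ginv x) = ginv (L x). Proof. apply (homV G HG L LM). Qed.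

Lemma conjz0 y : conjz 0 y = y.
Proof. unfold conjz. simpl. rewrite zpow0. gsimpl. reflexivity. Qed.

Lemma conjz_add k l y : conjz (k + l) y = conjz k (conjz l y).
Proof. unfold conjz. rewrite !zpow_neg, !zpow_add. gsimpl. reflexivity. Qed.

Lemma conjzV k y : conjz k (ginv y) = ginv (conjz k y).
Proof. unfold conjz. rewrite zpow_neg. gsimpl. reflexivity. Qed.

Lemma conjzM k x y : conjz k (gmul x y) = gmul (conjz k x) (conjz k y).
Proof. unfold conjz. rewrite zpow_neg. gsimpl. reflexivity. Qed.

Lemma conjz1 y : conjz 1 y = cj G t false y.
Proof. unfold conjz, cj. rewrite zpow_neg, zpow1. reflexivity. Qed.
Lemma conjzm1 y : conjz (-1) y = cj G t true y.
Proof. unfold conjz, cj. replace (- -1) with 1 by lia. replace (-1) with (- (1)) by lia. rewrite zpow_neg, zpow1. reflexivity. Qed.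

Lemma Tconj_up y : A y -> gmul T (L y) = gmul (L (conjz 1 y)) T.
Proof. intro. rewrite conjz1. apply Sperm_conj. simpl. auto. Qed.

Lemma Tconj_down y : A (conjz (-1) y) -> gmul (ginv T) (L y) = gmul (L (conjz (-1) y)) (ginv T).
Proof.
  intro H. unfold T. rewrite Sperm_inv. rewrite conjzm1. apply Sperm_conj. simpl. unfold Cs.
  rewrite conjzm1 in H. exact H.
Qed.

Lemma Ppow y : (forall k, -K <= k < K -> A (conjz k y)) ->
  forall s, -K <= s <= K -> gmul (zpow T s) (L y) = gmul (L (conjz s y)) (zpow T s).
Proof.
  intros HA.
  assert (forall m : nat, Z.of_nat m <= K ->
     gmul (zpow T (Z.of_nat m)) (L y) = gmul (L (conjz (Z.of_nat m) y)) (zpow T (Z.of_nat m)) /\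
     gmul (zpow T (- Z.of_nat m)) (L y) = gmul (L (conjz (- Z.of_nat m) y)) (zpow T (- Z.of_nat m))).
  { induction m; intros Hm.
    - simpl. rewrite zpow0, conjz0. gsimpl. auto.
    - destruct IHm as [I1 I2]. lia.
      rewrite Nat2Z.inj_succ. unfold Z.succ. split.
      + rewrite zpow_succ. rewrite <- gmul_assoc, I1, gmul_assoc.
        rewrite Tconj_up by (apply HA; lia). rewrite <- gmul_assoc, <- conjz_add.
        replace (1 + Z.of_nat m) with (Z.of_nat m + 1) by lia. reflexivity.
      + replace (- (Z.of_nat m + 1)) with (- Z.of_nat m - 1) by lia.
        rewrite zpow_pred. rewrite <- gmul_assoc, I2, gmul_assoc.
        rewrite Tconj_down. rewrite <- gmul_assoc, <- conjz_add.
        replace (-1 + - Z.of_nat m) with (- Z.of_nat m - 1) by lia. reflexivity.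
        rewrite <- conjz_add. apply HA. lia. }
  intros s Hs. destruct (Z_le_gt_dec 0 s).
  - replace s with (Z.of_nat (Z.to_nat s)) by lia. apply H; lia.
  - replace s with (- Z.of_nat (Z.to_nat (- s))) by lia. apply H; lia.
Qed.
Definition sigma (j : nat) : HG := gmul (L (a j)) (zpow T (e j)).
Definition le (l : letter) : Z := if snd l then - e (fst l) else e (fst l).
Fixpoint lvl (w : word) : Z := match w with [] => 0 | l :: w' => le l + lvl w' end.

Lemma phi_eval w : phi (eval_word g w) = lvl w.
Proof.
  induction w as [|[j []] w IH]; simpl. apply (phi1 G phi phiM).
  rewrite phiM, (phiV G phi phiM), IH. reflexivity.
  rewrite phiM, IH. reflexivity.
Qed.

Fixpoint windowed (s : Z) (w : word) : Prop :=
  -K <= s <= K /\ match w with [] => True | l :: w' => windowed (s + le l) w' end.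
Fixpoint absum (w : word) : Z := match w with [] => 0 | l :: w' => Z.abs (le l) + absum w' end.
Lemma absum_nonneg w : 0 <= absum w.
Proof. induction w; simpl; lia. Qed.
Lemma absum_win w : forall s, Z.abs s + absum w <= K -> windowed s w.
Proof.
  induction w as [|l w IH]; intros s Hs; simpl in *. split; auto; lia.
  pose proof (absum_nonneg w). split. lia. apply IH. lia.
Qed.

Lemma HAa j : (j < n)%nat -> forall k, -K <= k < K -> A (conjz k (a j)).
Proof. intros. apply gen_incl. exists j, k. auto. Qed.
Lemma HAai j : (j < n)%nat -> forall k, -K <= k < K -> A (conjz k (ginv (a j))).
Proof. intros. rewrite conjzV. apply AV. apply HAa; auto. Qed.

Lemma window w : forall s, word_on n w -> windowed s w ->
  gmul (zpow T s) (eval_word sigma w) =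
  gmul (L (gmul (gmul (zpow t s) (eval_word g w)) (zpow t (- (s + lvl w))))) (zpow T (s + lvl w)).
Proof.
  induction w as [|[j b] w IH]; intros s Hon Hw.
  - simpl. replace (s + 0) with s by lia. rewrite zpow_neg. gsimpl. rewrite L1. gsimpl. reflexivity.
  - assert (Hj : (j < n)%nat) by (apply (Hon (j, b)); left; reflexivity).
    assert (Hon' : word_on n w) by (intros l Hl; apply Hon; right; auto).
    destruct Hw as [Hs Hw]. simpl in Hw.
    rewrite !eval_cons. unfold lval. cbn [fst snd lvl]. unfold le in *; cbn [fst snd] in *.
    destruct b.
    + assert (Hs' : -K <= s + - e j <= K) by (destruct w; simpl in Hw; tauto).
      assert (E1 := Ppow (ginv (a j)) (HAai j Hj) (s + - e j) Hs').
      transitivity (gmul (L (conjz (s + - e j) (ginv (a j)))) (gmul (zpow T (s + - e j)) (eval_word sigma w))).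
      { unfold sigma. rewrite ginv_mul, <- LV, <- zpow_neg, zpow_add. rewrite zpow_add in E1.
        gsimpl. gsimpl_in E1.
        rewrite (gmul_assoc _ (zpow T (- e j)) (L (ginv (a j)))), (gmul_assoc _ (zpow T s)).
        rewrite E1. gsimpl. reflexivity. }
      rewrite IH by auto. rewrite gmul_assoc, <- LM.
      replace (s + - e j + lvl w) with (s + (- e j + lvl w)) by lia. f_equal. f_equal.
      unfold conjz, a. rewrite ?zpow_neg, ?zpow_add, ?zpow_neg. gsimpl. reflexivity.
    + assert (E1 := Ppow (a j) (HAa j Hj) s Hs).
      transitivity (gmul (L (conjz s (a j))) (gmul (zpow T (s + e j)) (eval_word sigma w))).
      { unfold sigma. rewrite zpow_add. gsimpl. rewrite gmul_assoc, E1. gsimpl. reflexivity. }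
      rewrite IH by auto. rewrite gmul_assoc, <- LM.
      replace (s + e j + lvl w) with (s + (e j + lvl w)) by lia. f_equal. f_equal.
      unfold conjz, a. rewrite ?zpow_neg, ?zpow_add, ?zpow_neg. gsimpl. reflexivity.
Qed.

Variable R : list word.
Hypothesis HRon : forall r, In r R -> word_on n r.
Hypothesis Hrel : forall r, In r R -> eval_word g r = gone.
Hypothesis Hpres : forall w, word_on n w -> eval_word g w = gone -> pres_equiv R w [].
Hypothesis HKR : forall r, In r R -> absum r <= K.
Variable wt : word.
Hypothesis Hwt_on : word_on n wt.
Hypothesis Hwt : eval_word g wt = t.
Hypothesis HKt : absum wt <= K.

Lemma sigma_rel r : In r R -> eval_word sigma r = gone.
Proof.
  intro Hr. assert (W := window r 0 (HRon r Hr) (absum_win r 0 ltac:(simpl; specialize (HKR r Hr); lia))).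
  assert (Hl : lvl r = 0) by (rewrite <- phi_eval, Hrel; auto; apply (phi1 G phi phiM)).
  rewrite Hl, Hrel in W by auto. rewrite Z.add_0_l in W. change (- 0) with 0 in W. rewrite !zpow0 in W. gsimpl_in W. rewrite L1 in W.
  gsimpl_in W. exact W.
Qed.

Lemma sigma_t : eval_word sigma wt = T.
Proof.
  assert (W := window wt 0 Hwt_on (absum_win wt 0 ltac:(simpl; lia))).
  assert (Hl : lvl wt = 1) by (rewrite <- phi_eval, Hwt; auto).
  rewrite Hl, Hwt in W. rewrite Z.add_0_l in W. rewrite zpow0, zpow_neg, zpow1 in W. gsimpl_in W. rewrite L1 in W.
  gsimpl_in W. rewrite zpow1 in W. exact W.
Qed.

Lemma sig_univ u v : word_on n u -> word_on n v -> eval_word g u = eval_word g v ->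
  eval_word sigma u = eval_word sigma v.
Proof. apply (univ G HG g sigma n R Hpres sigma_rel). Qed.

Definition SB (y : G) : Prop := exists j k, (j < n)%nat /\ -K <= k <= K /\ y = conjz k (a j).
Definition B : G -> Prop := gen SB.

Lemma SBword y : SB y -> exists u, word_on n u /\ eval_word g u = y /\ eval_word sigma u = L y.
Proof.
  intros [j [k [Hj [Hk ->]]]].
  exists (pw wt k ++ ((j, false) :: pw wt (- e j)) ++ pw wt (- k)).
  split; [|split].
  - apply word_on_app. apply word_on_pw; auto. apply word_on_app. apply word_on_cons. simpl; auto.
    apply word_on_pw; auto. apply word_on_pw; auto.
  - rewrite !eval_app, eval_cons, !eval_pw, Hwt. unfold lval, conjz, a. simpl. gsimpl. reflexivity.
  - rewrite !eval_app, eval_cons, !eval_pw, sigma_t. unfold lval, sigma. simpl fst. simpl snd.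
    rewrite !zpow_neg. gsimpl.
    assert (E1 := Ppow (a j) (HAa j Hj) k Hk).
    rewrite (gmul_assoc _ (zpow T k)), E1. gsimpl. reflexivity.
Qed.

Lemma Bword y : B y -> exists u, word_on n u /\ eval_word g u = y /\ eval_word sigma u = L y.
Proof.
  induction 1.
  - exists []. split. apply word_on_nil. split; reflexivity || (simpl; symmetry; apply L1).
  - destruct (SBword s H) as [u1 [O1 [E1 F1]]]. destruct IHgen as [u2 [O2 [E2 F2]]].
    exists (u1 ++ u2). split. apply word_on_app; auto. split; rewrite !eval_app. congruence.
    rewrite LM. congruence.
  - destruct (SBword s H) as [u1 [O1 [E1 F1]]]. destruct IHgen as [u2 [O2 [E2 F2]]].
    exists (word_inv u1 ++ u2). split. apply word_on_app; auto using word_on_inv.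
    split; rewrite !eval_app, eval_inv. congruence.
    rewrite LM, LV. congruence.
Qed.

Definition cls (l : letter) : bool * bool := (Nat.eqb (fst l) 0, snd l).

Lemma cls_inv l l' : (fst l < 2)%nat -> (fst l' < 2)%nat ->
  cls l' = (fst (cls l), negb (snd (cls l))) -> l' = letter_inv l.
Proof.
  destruct l as [k b], l' as [k' b']; unfold cls, letter_inv; simpl. intros H1 H2 E.
  inversion E. f_equal. destruct k as [|[|]], k' as [|[|]]; simpl in *; try lia; discriminate.
Qed.

Lemma F2 p q : B p -> ~ Cs G t A p -> B q -> ~ A q -> contains_F2 G.
Proof.
  intros Bp Cp Bq Aq.
  destruct (Bword p Bp) as [up [Op [Ep Fp]]]. destruct (Bword q Bq) as [uq [Oq [Eq Fq]]].
  exists (gmul p t), (gmul q (ginv t)).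
  intros W Won Wred Wne Heq.
  set (uu := fun k => if Nat.eqb k 0 then up ++ wt else uq ++ word_inv wt).
  assert (Huu : forall k, word_on n (uu k)).
  { intro k. unfold uu. destruct (Nat.eqb k 0); apply word_on_app; auto using word_on_inv. }
  assert (E1 : eval_word g (wsubst uu W) = eval_word g []).
  { rewrite eval_wsubst. change (eval_word g []) with (@gone G). rewrite <- Heq. apply eval_ext. intro k. unfold uu.
    destruct (Nat.eqb k 0); rewrite eval_app; try rewrite eval_inv; rewrite Hwt, ?Ep, ?Eq; reflexivity. }
  apply sig_univ in E1; [|apply word_on_wsubst; auto|apply word_on_nil].
  rewrite eval_wsubst in E1.
  set (fab := fun k : nat => if Nat.eqb k 0 then @gmul HG (L p) T else @gmul HG (L q) (ginv T)).
  assert (E2 : eval_word (fun k => eval_word sigma (uu k)) W = eval_word fab W).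
  { apply eval_ext. intro k. unfold uu, fab.
    destruct (Nat.eqb k 0); rewrite eval_app; try rewrite eval_inv; rewrite sigma_t, ?Fp, ?Fq; reflexivity. }
  rewrite E2 in E1. clear E2.
  set (o := exist (fun x : nf G => vl G t A (snd x)) (gone, []) I : X G t A).
  assert (Hstep : forall l y, proj1_sig (pf (lval fab l) y) = act G t A p q (cls l) (proj1_sig y)).
  { intros [k []] y; unfold fab, lval, cls; simpl fst; simpl snd; destruct (Nat.eqb k 0); reflexivity. }
  assert (Claim : forall W, W <> [] -> reduced W -> word_on 2 W ->
            forall l, hd_error W = Some l -> XS G t A p q (cls l) (proj1_sig (pf (eval_word fab W) o))).
  { clear W Won Wred Wne Heq E1.
    induction W as [|l W IH]; intros Hne Hred Hon l0 Hl0. congruence.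
    simpl in Hl0. inversion Hl0. subst l0. rewrite eval_cons.
    change (proj1_sig (pf (@gmul HG (lval fab l) (eval_word fab W)) o)) with
           (proj1_sig (pf (lval fab l) (pf (eval_word fab W) o))).
    rewrite Hstep.
    apply (act_in G t A A1 AM AV p q Cp Aq _ (match W with [] => (true, true) | l' :: _ => cls l' end)).
    destruct W as [|l' W'].
    - left. reflexivity.
    - right. destruct Hred as [Hr1 Hr2]. split.
      + apply IH; auto. discriminate. intros x Hx. apply Hon. right. auto.
      + intro Hc. apply cls_inv in Hc. auto. apply (Hon l); left; auto. apply (Hon l'); right; left; auto. }
  destruct W as [|l W']. congruence.
  assert (C := Claim (l :: W') Wne Wred Won l eq_refl).
  rewrite E1 in C. apply (XS_ne G t A p q _ _ C). reflexivity.
Qed.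

Hypothesis Hgen : forall x : G, exists w, word_on n w /\ eval_word g w = x.
Hypothesis nF2 : ~ contains_F2 G.

Lemma A_sub_B y : A y -> B y.
Proof. apply gen_sub. intros z [j [k [Hj [Hk ->]]]]. apply gen_incl. exists j, k. split; auto. split; auto. lia. Qed.

Lemma A_conj_up y : A y -> B (conjz 1 y).
Proof.
  intro Hy. rewrite conjz1. unfold cj. apply (gen_conj G SA t y) in Hy.
  revert Hy. apply gen_sub. intros z [s [[j [k [Hj [Hk ->]]]] ->]].
  apply gen_incl. exists j, (k + 1). split; auto. split. lia.
  rewrite Z.add_comm, conjz_add, conjz1. reflexivity.
Qed.

Lemma dich : exists d, (d = 1 \/ d = -1) /\ forall y, B y -> B (conjz d y).
Proof.
  destruct (classic (exists p, B p /\ ~ Cs G t A p)) as [[p [Bp Cp]]|Np].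
  - destruct (classic (exists q, B q /\ ~ A q)) as [[q [Bq Aq]]|Nq].
    + exfalso. apply nF2. apply (F2 p q); auto.
    + exists 1. split; auto. intros y By. apply A_conj_up.
      apply NNPP. intro Ay. apply Nq. eauto.
  - exists (-1). split; auto. intros y By. apply A_sub_B. rewrite conjzm1. unfold cj.
    assert (Cs G t A y) by (apply NNPP; intro; apply Np; eauto). exact H.
Qed.

Definition Nset : G -> Prop := gen (fun y => exists s j, (j < n)%nat /\ y = conjz s (a j)).

Lemma Nset_conj s z : Nset z -> Nset (conjz s z).
Proof.
  intro Hz. unfold conjz. rewrite zpow_neg. apply (gen_conj G _ (zpow t s)) in Hz.
  revert Hz. apply gen_sub. intros y [w [[s' [j [Hj ->]]] ->]]. apply gen_incl.
  exists (s + s'), j. split; auto. rewrite conjz_add. unfold conjz. rewrite !zpow_neg. reflexivity.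
Qed.

Lemma Nset_a j : (j < n)%nat -> Nset (a j).
Proof. intro. apply gen_incl. exists 0, j. rewrite conjz0. auto. Qed.

Lemma Nset_eval w : word_on n w -> Nset (gmul (eval_word g w) (zpow t (- lvl w))).
Proof.
  induction w as [|[j b] w IH]; intro Hon.
  - simpl. gsimpl. rewrite zpow0. constructor.
  - assert (Hj : (j < n)%nat) by (apply (Hon (j, b)); left; reflexivity).
    assert (Hon' : word_on n w) by (intros l Hl; apply Hon; right; auto).
    specialize (IH Hon'). rewrite eval_cons. unfold lval. cbn [fst snd lvl]. unfold le. cbn [fst snd].
    destruct b.
    + replace (gmul (gmul (ginv (g j)) (eval_word g w)) (zpow t (- (- e j + lvl w))))
        with (conjz (- e j) (gmul (ginv (a j)) (gmul (eval_word g w) (zpow t (- lvl w))))).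
      apply Nset_conj. apply gen_mul; auto. apply gen_inv. apply Nset_a; auto.
      unfold conjz, a. repeat rewrite ?zpow_neg, ?zpow_add. gsimpl. reflexivity.
    + replace (gmul (gmul (g j) (eval_word g w)) (zpow t (- (e j + lvl w))))
        with (gmul (a j) (conjz (e j) (gmul (eval_word g w) (zpow t (- lvl w))))).
      apply gen_mul. apply Nset_a; auto. apply Nset_conj; auto.
      unfold conjz, a. repeat rewrite ?zpow_neg, ?zpow_add. gsimpl. reflexivity.
Qed.

Definition Bl : list G :=
  flat_map (fun j => map (fun m => conjz (Z.of_nat m - K) (a j)) (seq 0 (Z.to_nat (2 * K + 1)))) (seq 0 n).
Definition Lst (i : nat) : list G := zpow t (Z.of_nat i) :: Bl.

Lemma length_flat_map_const {T U} (f : T -> list U) c l : (forall x, length (f x) = c) ->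
  length (flat_map f l) = (length l * c)%nat.
Proof. intro H. induction l; simpl; auto. rewrite length_app, H, IHl. reflexivity. Qed.

Lemma Lst_length i : length (Lst i) = S (n * Z.to_nat (2 * K + 1)).
Proof.
  unfold Lst, Bl. simpl. f_equal. rewrite (length_flat_map_const _ (Z.to_nat (2 * K + 1))).
  rewrite length_seq. reflexivity. intro. rewrite length_map, length_seq. reflexivity.
Qed.

Lemma SB_Lst i y : SB y -> In y (Lst i).
Proof.
  intros [j [k [Hj [Hk ->]]]]. right. unfold Bl. apply in_flat_map. exists j. split.
  apply in_seq. lia. apply in_map_iff. exists (Z.to_nat (k + K)). split. f_equal. lia.
  apply in_seq. lia.
Qed.

Section WithD.
Variable d : Z.
Hypothesis Hd : d = 1 \/ d = -1.
Hypothesis HdB : forall y, B y -> B (conjz d y).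

Lemma Bpow y m : B y -> B (conjz (d * Z.of_nat m) y).
Proof.
  intro By. induction m. rewrite Z.mul_0_r, conjz0. auto.
  rewrite Nat2Z.inj_succ. replace (d * Z.succ (Z.of_nat m)) with (d + d * Z.of_nat m) by lia.
  rewrite conjz_add. auto.
Qed.

Variable i : nat.
Hypothesis Hi : (1 <= i)%nat.
Definition GL : G -> Prop := gen (fun y => In y (Lst i)).

Lemma B_GL y : B y -> GL y.
Proof. apply gen_sub. intros. apply gen_incl. apply SB_Lst. auto. Qed.

Lemma ti_GL q : GL (zpow (zpow t (Z.of_nat i)) q).
Proof. apply gen_zpow. apply gen_incl. left. reflexivity. Qed.

Lemma conj_GL s j : (j < n)%nat -> GL (conjz s (a j)).
Proof.
  intro Hj. set (I := Z.of_nat i). assert (HI : 0 < I) by (unfold I; lia).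
  set (m := (d * s) mod I). set (q := d * ((d * s) / I)).
  assert (Hm : 0 <= m) by (apply Z.mod_pos_bound; auto).
  assert (Es : s = I * q + d * Z.of_nat (Z.to_nat m)).
  { rewrite Z2Nat.id by auto. unfold q, m.
    assert (E := Z.div_mod (d * s) I ltac:(lia)).
    destruct Hd; subst d; lia. }
  rewrite Es, conjz_add.
  assert (HB : B (conjz (d * Z.of_nat (Z.to_nat m)) (a j))).
  { apply Bpow. apply gen_incl. exists j, 0. split; auto. split. lia. rewrite conjz0. reflexivity. }
  apply B_GL in HB. revert HB. generalize (conjz (d * Z.of_nat (Z.to_nat m)) (a j)). intros z Hz.
  unfold conjz. rewrite zpow_neg, zpow_mul. apply gen_mul. apply gen_mul; auto. apply ti_GL.
  apply gen_inv. apply ti_GL.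
Qed.

Lemma Gi_GL x : Gi G phi i x -> GL x.
Proof.
  intro Hx. destruct (Hgen x) as [w [Ow Ew]].
  assert (HN := Nset_eval w Ow). rewrite Ew in HN.
  assert (HG : GL (gmul x (zpow t (- lvl w)))).
  { revert HN. apply gen_sub. intros y [s [j [Hj ->]]]. apply conj_GL; auto. }
  unfold Gi in Hx. rewrite <- Ew, phi_eval in Hx. destruct Hx as [c Hc].
  replace x with (gmul (gmul x (zpow t (- lvl w))) (zpow (zpow t (Z.of_nat i)) c)).
  apply gen_mul; auto. apply ti_GL.
  rewrite <- zpow_mul, Z.mul_comm, <- Hc, zpow_neg. gsimpl. reflexivity.
Qed.

Lemma rank_i : rank_le G (Gi G phi i) (S (n * Z.to_nat (2 * K + 1))).
Proof.
  exists (Lst i). split. rewrite Lst_length. lia. split.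
  - intros y Hy. unfold Gi. destruct Hy as [<-|Hy].
    + rewrite (phi_zpow G phi phiM), Ht. exists 1. lia.
    + unfold Bl in Hy. apply in_flat_map in Hy. destruct Hy as [j [_ Hy]]. apply in_map_iff in Hy.
      destruct Hy as [m [<- _]]. unfold conjz, a. rewrite !phiM, !(phi_zpow G phi phiM), Ht.
      unfold e. exists 0. lia.
  - intros x Hx. apply gen_words. apply Gi_GL. auto.
Qed.
End WithD.

End Main.
Close Scope Z_scope.
From Stdlib Require Import Reals ZArith List Lia Lra.
Import ListNotations.

Lemma fold_absum_le (G : Group) (g : nat -> G) (phi : G -> Z) (R : list word) r :
  In r R -> (absum G g phi r <= fold_right (fun r acc => absum G g phi r + acc) 0 R)%Z.
Proof.
  induction R as [|r' R IH]; simpl. intros [].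
  assert (0 <= fold_right (fun r acc => absum G g phi r + acc) 0 R)%Z.
  { clear IH. induction R as [|r0 R0 IH0]; simpl. lia. pose proof (absum_nonneg G g phi r0). lia. }
  intros [->|Hr]. lia. specialize (IH Hr). pose proof (absum_nonneg G g phi r'). lia.
Qed.

Lemma fold_nonneg (G : Group) (g : nat -> G) (phi : G -> Z) (R : list word) :
  (0 <= fold_right (fun r acc => absum G g phi r + acc) 0 R)%Z.
Proof. induction R as [|r0 R0 IH0]; simpl. lia. pose proof (absum_nonneg G g phi r0). lia. Qed.

Theorem lemma3p2 (G : Group) :
  finitely_presented G -> ~ contains_F2 G ->
  forall phi : G -> Z, primitive_class G phi -> rank_gradient_zero G phi.
Proof.
  intros [n [g [R [HRon [Hgen [Hrel Hpres]]]]]] nF2 phi [phiM phiS].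
  destruct (phiS 1%Z) as [t Ht]. destruct (Hgen t) as [wt [Hwt_on Hwt]].
  set (K := (absum G g phi wt + fold_right (fun r acc => absum G g phi r + acc) 0 R)%Z).
  assert (HKR : forall r, In r R -> (absum G g phi r <= K)%Z).
  { intros r Hr. pose proof (fold_absum_le G g phi R r Hr). pose proof (absum_nonneg G g phi wt). unfold K. lia. }
  assert (K0 : (0 <= K)%Z).
  { pose proof (absum_nonneg G g phi wt). unfold K.
    pose proof (fold_nonneg G g phi R). lia. }
  assert (HKt : (absum G g phi wt <= K)%Z).
  { unfold K. pose proof (fold_nonneg G g phi R). lia. }
  destruct (dich G n g phi phiM t Ht K K0 R HRon Hrel Hpres HKR wt Hwt_on Hwt HKt nF2) as [d [Hd HdB]].
  set (M := S (n * Z.to_nat (2 * K + 1)%Z)).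
  intros eps N Heps.
  Local Open Scope R_scope.
  set (x := INR M / eps).
  destruct (archimed x) as [Hup _].
  set (z := up x) in *.
  assert (Hx0 : 0 <= x). { unfold x, Rdiv. apply Rmult_le_pos. apply pos_INR. left. apply Rinv_0_lt_compat. lra. }
  assert (Hz : (0 < z)%Z). { apply lt_0_IZR. lra. }
  set (i := Nat.max (Nat.max N 1) (Z.to_nat z)).
  exists i, M. split; [|split; [|split]].
  - unfold i. lia.
  - unfold i. lia.
  - apply (rank_i G n g phi phiM t Ht K K0 Hgen d Hd HdB i). unfold i. lia.
  - assert (E1 : INR M = eps * x) by (unfold x; field; lra).
    assert (E2 : IZR z <= INR i).
    { rewrite <- (Z2Nat.id z) by lia. rewrite <- INR_IZR_INZ. apply le_INR. unfold i. lia. }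
    rewrite E1. apply Rlt_le_trans with (eps * IZR z).
    apply Rmult_lt_compat_l; lra. apply Rmult_le_compat_l; lra.
Qed.
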